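(* Let $B$ be any Boolean algebra, considered as a Boolean metric space with $d(x,y)=x\triangle y$. If $U,V\subset B$ and $f:U\to V$ is an isometry, then there exists $a\in B$ such that the map $F:B\to B$, $F(x)=a\triangle x$, is an isometry of $B$ extending $f$.
   Context: An isometry between Boolean metric spaces is a bijection $f$ with $d(f(x),f(y))=d(x,y)$ for all $x,y$. $\triangle$ is symmetric difference in $B$. *)

(* Defs.v *)
(* A Boolean algebra is a ctbDistrLatticeType
   (complemented distributive lattice with top and bottom). *)
From HB Require Import structures.
From mathcomp Require Import all_boot all_order.
Set Implicit Arguments. Unset Strict Implicit. Unset Printing Implicit Defensive.
Import Order.TTheory.
Local Open Scope order_scope.

Definition symdiff {disp : Order.disp_t} {B : ctbDistrLatticeType disp} (x y : B) : B :=
  (x `\` y) `|` (y `\` x).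

Definition isometry {T1 T2 M : Type} (d1 : T1 -> T1 -> M) (d2 : T2 -> T2 -> M)
  (f : T1 -> T2) : Prop :=
  bijective f /\ forall x y, d2 (f x) (f y) = d1 x y.

(* Main.v *)
Require Import Defs.
From HB Require Import structures.
From mathcomp Require Import all_boot all_order.
From Stdlib Require Import Classical.
Import Order.Theory.
Local Open Scope order_scope.
Section S. Context {d : Order.disp_t} {L : ctbDistrLatticeType d}.
Implicit Types x y z : L.
Definition N x y z := (x `&` ~` y `&` ~` z) `|` (~` x `&` y `&` ~` z) `|` (~` x `&` ~` y `&` z) `|` (x `&` y `&` z).
Lemma ncompl x y : ~` symdiff x y = (~` x `&` ~` y) `|` (x `&` y).
Proof.
rewrite /symdiff !diffE complU !complI !complK !meetUl !meetUr.
by rewrite meetCx meetxC joinx0 join0x (meetC y x).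
Qed.
Lemma nf x y z : symdiff (symdiff x y) z = N x y z.
Proof.
rewrite {1}/symdiff !diffE ncompl /symdiff !diffE !meetUl !meetUr /N.
rewrite !meetA (meetC y (~` x)).
rewrite -[z `&` ~` x `&` ~` y]meetA [z `&` (_ `&` _)]meetC.
rewrite -[z `&` x `&` y]meetA [z `&` (x `&` y)]meetC.
by rewrite !joinA.
Qed.
Lemma symdiffC x y : symdiff x y = symdiff y x.
Proof. by rewrite /symdiff joinC. Qed.
Lemma symdiffA x y z : symdiff (symdiff x y) z = symdiff x (symdiff y z).
Proof.
rewrite (symdiffC x (symdiff y z)) !nf /N.
rewrite [y `&` ~` z `&` ~` x]meetC [~` y `&` z `&` ~` x]meetC [~` y `&` ~` z `&` x]meetC [y `&` z `&` x]meetC !meetA.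
congr (_ `|` _).
by rewrite [RHS]joinC joinA.
Qed.
Lemma symdiffxx x : symdiff x x = \bot.
Proof. by rewrite /symdiff diffxx joinx0. Qed.
Lemma symdiff0x x : symdiff \bot x = x.
Proof. by rewrite /symdiff diff0x diffx0 join0x. Qed.
Lemma symdiffK a x : symdiff a (symdiff a x) = x.
Proof. by rewrite -symdiffA symdiffxx symdiff0x. Qed.


End S.

Theorem mainTheorem14 (disp : Order.disp_t) (B : ctbDistrLatticeType disp)
  (U V : B -> Prop) (f : {x : B | U x} -> {y : B | V y}) :
  isometry (fun x y : {x : B | U x} => symdiff (proj1_sig x) (proj1_sig y))
           (fun x y : {y : B | V y} => symdiff (proj1_sig x) (proj1_sig y)) f ->
  exists a : B,
    isometry (@symdiff disp B) (@symdiff disp B) (fun x : B => symdiff a x) /\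
    forall x : {x : B | U x}, proj1_sig (f x) = symdiff a (proj1_sig x).
Proof.
move=> [_ Hd].
have iso a : isometry (@symdiff disp B) (@symdiff disp B) (fun x : B => symdiff a x).
  split; first by exists (symdiff a) => x; apply: symdiffK.
  move=> x y; by rewrite symdiffA -(symdiffA x a y) (symdiffC x a) symdiffA symdiffK.
case: (classic (exists u : {x : B | U x}, True)) => [[u _]|nE].
  exists (symdiff (proj1_sig (f u)) (proj1_sig u)); split => // x.
  have := Hd x u => /(congr1 (fun t => symdiff t (proj1_sig (f u)))).
  rewrite symdiffA symdiffxx symdiffC symdiff0x => ->.
  by rewrite symdiffA symdiffC (symdiffC (sval u)).
exists \bot; split => // x; exfalso; apply: nE; by exists x.
Qed.
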